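(* Consider symmetric simultaneous two-player weighted congestion games with affine costs and proportional cost functions, with arbitrary player weights $w_1,w_2\ge0$ ($w_1+w_2>0$). The price of anarchy (supremum over all weights and instances, with respect to pure Nash equilibria) is approximately $1.6096$, both for congestion games and for network routing games, and it is attained for $w_1/w_2\approx 1.1940$ and for $w_2/w_1\approx 1.1940$.
   Context: A weighted two-player congestion game with affine costs consists of a finite set $R$ of resources, coefficients $\alpha_r,\beta_r \geq 0$ for each $r\in R$, two players $i=1,2$ with weights $w_i\ge 0$, and for each player $i$ a nonempty finite set $\mathcal{A}_i \subseteq 2^R$ of actions; it is symmetric if $\mathcal{A}_1=\mathcal{A}_2$. In a network routing game, $R$ is the arc set of a directed graph, player $i$ has a source $s_i$ and sink $t_i$, and $\mathcal{A}_i$ is the set of arc sets of directed $s_i$–$t_i$ paths (symmetric: common source and sink). For an action profile $A=(A_1,A_2)$ the load of $r$ is $x_r(A)=\sum_{j:\, r\in A_j} w_j$. With proportional costs, player $i$ pays $C_i(A)=w_i\sum_{r\in A_i}(\alpha_r+\beta_r x_r(A))$. The social cost is $C(A)=C_1(A)+C_2(A)$. A pure Nash equilibrium is a profile from which no player can lower her cost by unilaterally changing her action. The price of anarchy of an instance is the maximum over Nash equilibria $A$ of $C(A)/\min_{A'} C(A')$; the price of anarchy of a class is the supremum over all instances (with positive optimal social cost). *)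

(* Defs.v *)
From HB Require Import structures.
From mathcomp Require Import all_boot all_order all_algebra.
From mathcomp Require Import Rstruct.
Set Implicit Arguments. Unset Strict Implicit. Unset Printing Implicit Defensive.
Import Order.TTheory GRing.Theory Num.Theory.
Local Open Scope ring_scope.

Notation RR := Rdefinitions.R.

Definition load (m : nat) (w1 w2 : RR) (A1 A2 : {set 'I_m}) (r : 'I_m) : RR :=
  (if r \in A1 then w1 else 0) + (if r \in A2 then w2 else 0).

Definition cost1 (m : nat) (alpha beta : 'I_m -> RR) (w1 w2 : RR)
  (A1 A2 : {set 'I_m}) : RR :=
  w1 * \sum_(r in A1) (alpha r + beta r * load w1 w2 A1 A2 r).

Definition cost2 (m : nat) (alpha beta : 'I_m -> RR) (w1 w2 : RR)
  (A1 A2 : {set 'I_m}) : RR :=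
  w2 * \sum_(r in A2) (alpha r + beta r * load w1 w2 A1 A2 r).

Definition social_cost (m : nat) (alpha beta : 'I_m -> RR) (w1 w2 : RR)
  (A1 A2 : {set 'I_m}) : RR :=
  cost1 alpha beta w1 w2 A1 A2 + cost2 alpha beta w1 w2 A1 A2.

Definition is_NE (m : nat) (alpha beta : 'I_m -> RR) (w1 w2 : RR)
  (acts : {set 'I_m} -> Prop) (A1 A2 : {set 'I_m}) : Prop :=
  acts A1 /\ acts A2 /\
  (forall B, acts B -> cost1 alpha beta w1 w2 A1 A2 <= cost1 alpha beta w1 w2 B A2) /\
  (forall B, acts B -> cost2 alpha beta w1 w2 A1 A2 <= cost2 alpha beta w1 w2 A1 B).

Definition is_OPT (m : nat) (alpha beta : 'I_m -> RR) (w1 w2 : RR)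
  (acts : {set 'I_m} -> Prop) (A1 A2 : {set 'I_m}) : Prop :=
  acts A1 /\ acts A2 /\
  (forall B1 B2, acts B1 -> acts B2 ->
     social_cost alpha beta w1 w2 A1 A2 <= social_cost alpha beta w1 w2 B1 B2).

(* [walk_to tl hd v p t]: the arc sequence p is a directed walk from v to t
   in the digraph with arcs 'I_m, arc e going from tl e to hd e. *)
Fixpoint walk_to (n m : nat) (tl hd : 'I_m -> 'I_n) (v : 'I_n) (p : seq 'I_m)
  (t : 'I_n) : bool :=
  match p with
  | [::] => v == t
  | e :: p' => (tl e == v) && walk_to tl hd (hd e) p' t
  end.

Definition st_path_arcs (n m : nat) (tl hd : 'I_m -> 'I_n) (s t : 'I_n)
  (A : {set 'I_m}) : Prop :=
  exists p : seq 'I_m,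
    walk_to tl hd s p t /\ uniq (s :: map hd p) /\ A = [set e in p].

(* Set of values C(A)/C(O) with A a pure NE and O a social optimum with
   C(O) > 0, over all symmetric two-player weighted congestion games with
   affine costs whose weights satisfy the constraint [W]; its supremum is
   the price of anarchy of the class. *)
Definition poa_ratios_cg (W : RR -> RR -> Prop) (x : RR) : Prop :=
  exists (m : nat) (alpha beta : 'I_m -> RR) (w1 w2 : RR)
         (acts : {set 'I_m} -> Prop) (A1 A2 O1 O2 : {set 'I_m}),
    (forall r, 0 <= alpha r) /\ (forall r, 0 <= beta r) /\
    0 <= w1 /\ 0 <= w2 /\ 0 < w1 + w2 /\ W w1 w2 /\
    (exists A, acts A) /\
    is_NE alpha beta w1 w2 acts A1 A2 /\
    is_OPT alpha beta w1 w2 acts O1 O2 /\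
    0 < social_cost alpha beta w1 w2 O1 O2 /\
    x = social_cost alpha beta w1 w2 A1 A2 / social_cost alpha beta w1 w2 O1 O2.

Definition poa_ratios_net (W : RR -> RR -> Prop) (x : RR) : Prop :=
  exists (n m : nat) (tl hd : 'I_m -> 'I_n) (s t : 'I_n)
         (alpha beta : 'I_m -> RR) (w1 w2 : RR) (A1 A2 O1 O2 : {set 'I_m}),
    (forall r, 0 <= alpha r) /\ (forall r, 0 <= beta r) /\
    0 <= w1 /\ 0 <= w2 /\ 0 < w1 + w2 /\ W w1 w2 /\
    (exists A, st_path_arcs tl hd s t A) /\
    is_NE alpha beta w1 w2 (st_path_arcs tl hd s t) A1 A2 /\
    is_OPT alpha beta w1 w2 (st_path_arcs tl hd s t) O1 O2 /\
    0 < social_cost alpha beta w1 w2 O1 O2 /\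
    x = social_cost alpha beta w1 w2 A1 A2 / social_cost alpha beta w1 w2 O1 O2.

Definition is_sup (S : RR -> Prop) (x : RR) : Prop :=
  (forall y, S y -> y <= x) /\
  (forall z, (forall y, S y -> y <= z) -> x <= z).

Definition any_weights (w1 w2 : RR) : Prop := True.
Definition ratio12 (r : RR) (w1 w2 : RR) : Prop := 0 < w2 /\ w1 = r * w2.
Definition ratio21 (r : RR) (w1 w2 : RR) : Prop := 0 < w1 /\ w2 = r * w1.

(* Main.v *)
Require Import Defs.
From HB Require Import structures.
From mathcomp Require Import all_boot all_order all_algebra.
From mathcomp Require Import Rstruct.
From Stdlib Require Reals Lra Psatz.
Import Order.TTheory GRing.Theory Num.Theory.
Module StdPart.
Import Stdlib.Reals.Reals Stdlib.micromega.Lra Stdlib.micromega.Psatz.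
Local Open Scope R_scope.

Definition Pp (x : R) := 3*x^6+8*x^5+6*x^4-6*x^3-13*x^2-8*x-2.
Definition Np (x : R) := 2*x^4+6*x^3+8*x^2+6*x+2.
Definition Dp (x : R) := 2*x^4+3*x^3+4*x^2+4*x+2.

Lemma Pp_cont : continuity Pp.
Proof. unfold Pp; reg. Qed.

Lemma root_ex : {r : R | 11935/10000 <= r <= 11945/10000 /\ Pp r = 0}.
Proof.
apply IVT; [exact Pp_cont | Lra.lra | unfold Pp; Lra.lra | unfold Pp; Lra.lra].
Qed.

Lemma Dp_pos x : 0 <= x -> 0 < Dp x.
Proof. intro h; unfold Dp; Lra.nra. Qed.

Lemma key_ineq (r w : R) : 11935/10000 <= r <= 11945/10000 -> Pp r = 0 -> 0 <= w ->
  Np w * Dp r <= Np r * Dp w.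
Proof.
intros [h1 h2] hp hw.
assert (E : Np r * Dp w - Np w * Dp r =
  (w - r)^2 * ((-8 -20*r -12*r^2 +12*r^3 +16*r^4 +6*r^5)
              + (-6 -6*r +8*r^2 +16*r^3 +6*r^4) * w + (4*r + 8*r^2 + 6*r^3) * w^2)
  + 2 * (w - r) * Pp r) by (unfold Np, Dp, Pp; ring).
rewrite hp in E.
assert (hA : 0 <= -8 -20*r -12*r^2 +12*r^3 +16*r^4 +6*r^5) by Lra.nra.
assert (hB : 0 <= -6 -6*r +8*r^2 +16*r^3 +6*r^4) by Lra.nra.
assert (hC : 0 <= 4*r + 8*r^2 + 6*r^3) by Lra.nra.
assert (0 <= (w - r)^2) by apply pow2_ge_0.
assert (0 <= (-8 -20*r -12*r^2 +12*r^3 +16*r^4 +6*r^5)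
              + (-6 -6*r +8*r^2 +16*r^3 +6*r^4) * w + (4*r + 8*r^2 + 6*r^3) * w^2).
{ assert (0 <= (-6 -6*r +8*r^2 +16*r^3 +6*r^4) * w) by (apply Rmult_le_pos; Lra.lra).
  assert (0 <= (4*r + 8*r^2 + 6*r^3) * w^2) by (apply Rmult_le_pos; [Lra.lra | apply pow2_ge_0]).
  Lra.lra. }
assert (0 <= (w - r)^2 * ((-8 -20*r -12*r^2 +12*r^3 +16*r^4 +6*r^5)
              + (-6 -6*r +8*r^2 +16*r^3 +6*r^4) * w + (4*r + 8*r^2 + 6*r^3) * w^2)) by (apply Rmult_le_pos; Lra.lra).
Lra.lra.
Qed.

Lemma tbounds r : 11935/10000 <= r <= 11945/10000 ->
  let t := r - 597/500 in
  -1/2000 <= t <= 1/2000 /\ 0 <= t^2 <= 1/4000000 /\ -1/8000000000 <= t^3 <= 1/8000000000 /\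
  0 <= t^4 <= 1/16000000000000.
Proof.
intros [h1 h2] t.
assert (ht : -1/2000 <= t <= 1/2000) by (unfold t; Lra.lra).
assert (h2' : 0 <= t^2 <= 1/4000000) by (split; [apply pow2_ge_0 | Lra.nra]).
assert (h3 : -1/8000000000 <= t^3 <= 1/8000000000).
{ replace (t^3) with (t * t^2) by ring. split; Lra.nra. }
assert (h4 : 0 <= t^4 <= 1/16000000000000).
{ replace (t^4) with (t^2 * t^2) by ring. split; Lra.nra. }
tauto.
Qed.

Lemma rho_lo r : 11935/10000 <= r <= 11945/10000 -> 16095/10000 * Dp r <= Np r.
Proof.
intro h. destruct (tbounds r h) as [h1 [h2 [h3 h4]]].
set (t := r - 597/500) in *.
replace r with (597/500 + t) by (unfold t; ring).
unfold Np, Dp. Lra.lra.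
Qed.
Lemma rho_hi r : 11935/10000 <= r <= 11945/10000 -> Np r <= 16097/10000 * Dp r.
Proof.
intro h. destruct (tbounds r h) as [h1 [h2 [h3 h4]]].
set (t := r - 597/500) in *.
replace r with (597/500 + t) by (unfold t; ring).
unfold Np, Dp. Lra.lra.
Qed.

Definition cA' (v1 v2 rho den n1 n2 n3 n4 n5 n6 : R) (a1 a2 o1 o2 : bool) : R :=
  let x := (if a1 then v1 else 0) + (if a2 then v2 else 0) in
  let y := (if o1 then v1 else 0) + (if o2 then v2 else 0) in
  den * (x - rho * y)
  + n1 * ((if o1 then 1 else 0) - (if a1 then 1 else 0))
  + n2 * ((if o2 then 1 else 0) - (if a1 then 1 else 0))
  + n3 * ((if a2 then 1 else 0) - (if a1 then 1 else 0))
  + n4 * ((if o1 then 1 else 0) - (if a2 then 1 else 0))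
  + n5 * ((if o2 then 1 else 0) - (if a2 then 1 else 0))
  + n6 * ((if a1 then 1 else 0) - (if a2 then 1 else 0)).
Definition cB' (v1 v2 rho den n1 n2 n3 n4 n5 n6 : R) (a1 a2 o1 o2 : bool) : R :=
  let x := (if a1 then v1 else 0) + (if a2 then v2 else 0) in
  let y := (if o1 then v1 else 0) + (if o2 then v2 else 0) in
  den * (x * x - rho * (y * y))
  + n1 * ((if o1 then v1 + (if a2 then v2 else 0) else 0) - (if a1 then x else 0))
  + n2 * ((if o2 then v1 + (if a2 then v2 else 0) else 0) - (if a1 then x else 0))
  + n3 * ((if a2 then v1 + v2 else 0) - (if a1 then x else 0))
  + n4 * ((if o1 then v2 + (if a1 then v1 else 0) else 0) - (if a2 then x else 0))
  + n5 * ((if o2 then v2 + (if a1 then v1 else 0) else 0) - (if a2 then x else 0))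
  + n6 * ((if a1 then v2 + v1 else 0) - (if a2 then x else 0)).


Ltac solve_conds := intros a1 a2 o1 o2; destruct a1, a2, o1, o2; unfold cA', cB'; simpl; split;
  first [Lra.lra | Lra.nra].

Lemma regIII (u : R) : 0 <= u -> u <= 5/12 -> forall a1 a2 o1 o2,
  cA' 1 u (16095/10000) 1 (108/100 - 36/100 * u^2) (87/100 * u^2) 0 (1/2) (41/100 * u) 0 a1 a2 o1 o2 <= 0 /\
  cB' 1 u (16095/10000) 1 (108/100 - 36/100 * u^2) (87/100 * u^2) 0 (1/2) (41/100 * u) 0 a1 a2 o1 o2 <= 0.
Proof.
intros h1 h2.
assert (0 <= u * (5/12 - u)) by Lra.nra.
assert (0 <= u * u) by Lra.nra.
assert (0 <= u * (u * (5/12 - u))) by Lra.nra.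
solve_conds.
Qed.

Lemma regI (w : R) : 1 <= w -> w <= 106/100 -> forall a1 a2 o1 o2,
  cA' w 1 (16095/10000) 1 (-62/100 + 122/100 * w) (606/1000) 0 (606/1000 * w) (826/1000 - 2335/10000 * w) 0 a1 a2 o1 o2 <= 0 /\
  cB' w 1 (16095/10000) 1 (-62/100 + 122/100 * w) (606/1000) 0 (606/1000 * w) (826/1000 - 2335/10000 * w) 0 a1 a2 o1 o2 <= 0.
Proof.
intros h1 h2.
assert (0 <= (w - 1) * (106/100 - w)) by Lra.nra.
solve_conds.
Qed.

Lemma regT : forall a1 a2 o1 o2,
  cA' 1 0 (16095/10000) 1 1 0 0 0 0 0 a1 a2 o1 o2 <= 0 /\
  cB' 1 0 (16095/10000) 1 1 0 0 0 0 0 a1 a2 o1 o2 <= 0.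
Proof. solve_conds. Qed.

Lemma regII (w rho : R) : 106/100 <= w -> w <= 24/10 -> 16095/10000 <= rho -> rho <= 16097/10000 ->
  Np w <= rho * Dp w ->
  forall a1 a2 o1 o2,
  cA' w 1 rho (w * (w + 1)) ((2-2*rho) + (5-3*rho)*w + (5-2*rho)*w^2 + (2-rho)*w^3) ((rho-1)*(w+w^2)) 0
     ((rho-1)*(w^2+w^3)) ((2-rho)*w + (3-rho)*w^2 + (1-rho)*w^3) 0 a1 a2 o1 o2 <= 0 /\
  cB' w 1 rho (w * (w + 1)) ((2-2*rho) + (5-3*rho)*w + (5-2*rho)*w^2 + (2-rho)*w^3) ((rho-1)*(w+w^2)) 0
     ((rho-1)*(w^2+w^3)) ((2-rho)*w + (3-rho)*w^2 + (1-rho)*w^3) 0 a1 a2 o1 o2 <= 0.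
Proof.
intros h1 h2 h3 h4 hk. unfold Np, Dp in hk.
assert (0 <= (w - 106/100) * (24/10 - w)) by Lra.nra.
assert (1 <= w^2) by Lra.nra.
assert (1 <= w^3) by Lra.nra.
assert (1 <= w^4) by Lra.nra.
solve_conds.
Qed.

Definition condsR v1 v2 rho den n1 n2 n3 n4 n5 n6 : Prop :=
  forall a1 a2 o1 o2, cA' v1 v2 rho den n1 n2 n3 n4 n5 n6 a1 a2 o1 o2 <= 0 /\
                      cB' v1 v2 rho den n1 n2 n3 n4 n5 n6 a1 a2 o1 o2 <= 0.

Lemma le_divr a b c : 0 < c -> a * c <= b -> a <= b / c.
Proof.
intros hc h. apply (Rmult_le_reg_r c); [exact hc|].
assert (hn : c <> 0) by Lra.lra. unfold Rdiv. rewrite Rmult_assoc (Rinv_l c hn) Rmult_1_r. exact h.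
Qed.
Lemma le_divl a b c : 0 < c -> a <= b * c -> a / c <= b.
Proof.
intros hc h. apply (Rmult_le_reg_r c); [exact hc|].
assert (hn : c <> 0) by Lra.lra. unfold Rdiv. rewrite Rmult_assoc (Rinv_l c hn) Rmult_1_r. exact h.
Qed.

Lemma cert (r w1 w2 : R) : 11935/10000 <= r <= 11945/10000 -> Pp r = 0 -> 0 < w1 -> 0 <= w2 -> w2 <= w1 ->
 exists s v1 v2 den n1 n2 n3 n4 n5 n6 rho',
  0 < s /\ w1 = s*v1 /\ w2 = s*v2 /\ 0 < den /\ 0 <= n1 /\ 0 <= n2 /\ 0 <= n3 /\ 0 <= n4 /\ 0 <= n5 /\ 0 <= n6 /\
  (w2 = 0 -> n4 = 0 /\ n5 = 0 /\ n6 = 0) /\ rho' <= Np r / Dp r /\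
  condsR v1 v2 rho' den n1 n2 n3 n4 n5 n6.
Proof.
intros hr hp h1 h2 h3.
assert (hD : 0 < Dp r) by (apply Dp_pos; Lra.lra).
assert (hlo : 16095/10000 <= Np r / Dp r).
{ apply le_divr; [exact hD|]. apply rho_lo; exact hr. }
assert (hhi : Np r / Dp r <= 16097/10000).
{ apply le_divl; [exact hD|]. assert (Np r <= 16097/10000 * Dp r) by (apply rho_hi; exact hr). Lra.lra. }
destruct (Req_dec w2 0) as [z|nz].
{ exists w1, 1, 0, 1, 1, 0, 0, 0, 0, 0, (16095/10000).
  repeat split; try Lra.lra; try (intro; Lra.lra).
  all: apply regT. }
assert (hw2 : 0 < w2) by Lra.lra.
set (w := w1 / w2).
assert (ew : w1 = w2 * w) by (unfold w; field; Lra.lra).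
assert (hw : 1 <= w).
{ unfold w. apply le_divr; [exact hw2|]. Lra.lra. }
destruct (Rle_lt_dec w (106/100)) as [c1|c1].
{ exists w2, w, 1, 1, (-62/100 + 122/100 * w), (606/1000), 0, (606/1000 * w), (826/1000 - 2335/10000 * w), 0, (16095/10000).
  repeat split; try Lra.lra; try (intro; Lra.lra).
  all: apply regI; Lra.lra. }
destruct (Rle_lt_dec w (24/10)) as [c2|c2].
{ set (rho := Np r / Dp r) in *.
  exists w2, w, 1, (w * (w + 1)), ((2-2*rho) + (5-3*rho)*w + (5-2*rho)*w^2 + (2-rho)*w^3), ((rho-1)*(w+w^2)), 0,
     ((rho-1)*(w^2+w^3)), ((2-rho)*w + (3-rho)*w^2 + (1-rho)*w^3), 0, rho.
  assert (1 <= w^2) by Lra.nra.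
  assert (1 <= w^3) by Lra.nra.
  assert (0 <= (w - 106/100) * (24/10 - w)) by Lra.nra.
  assert (hk : Np w <= rho * Dp w).
  { assert (K := key_ineq r w hr hp ltac:(Lra.lra)).
    unfold rho.
    replace (Np r / Dp r * Dp w) with ((Np r * Dp w) / Dp r) by (field; Lra.lra).
    apply le_divr; [exact hD | exact K]. }
  repeat split; try Lra.lra; try Lra.nra; try (intro; Lra.lra).
  all: apply regII; Lra.lra. }
set (u := w2 / w1).
assert (eu : w2 = w1 * u) by (unfold u; field; Lra.lra).
assert (hu : u <= 5/12).
{ unfold u. apply le_divl; [exact h1|]. rewrite ew. Lra.nra. }
assert (hu0 : 0 <= u) by (unfold u, Rdiv; apply Rmult_le_pos; [Lra.lra | left; apply Rinv_0_lt_compat; Lra.lra]).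
exists w1, 1, u, 1, (108/100 - 36/100 * u^2), (87/100 * u^2), 0, (1/2), (41/100 * u), 0, (16095/10000).
assert (u^2 <= 1) by Lra.nra.
assert (0 <= u^2) by apply pow2_ge_0.
repeat split; try Lra.lra; try Lra.nra; try (intro; Lra.lra).
all: apply regIII; Lra.lra.
Qed.


Definition k16095 : R := 16095/10000.
Definition k16097 : R := 16097/10000.
Definition k11935 : R := 11935/10000.
Definition k11945 : R := 11945/10000.
Lemma rho_bounds r : 11935/10000 <= r <= 11945/10000 -> k16095 <= Np r / Dp r <= k16097.
Proof.
intro hr. assert (hD : 0 < Dp r) by (apply Dp_pos; Lra.lra). unfold k16095, k16097. split.
- apply le_divr; [exact hD|]. apply rho_lo; exact hr.
- apply le_divl; [exact hD|]. assert (Np r <= 16097/10000 * Dp r) by (apply rho_hi; exact hr). Lra.lra.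
Qed.
Lemma r_pos r : 11935/10000 <= r <= 11945/10000 -> 1 <= r.
Proof. intros; Lra.lra. Qed.
Lemma Np_pos r : 0 <= r -> 0 < Np r.
Proof. intros; unfold Np; Lra.nra. Qed.

Definition rgood (r : R) : Prop := 11935/10000 <= r <= 11945/10000 /\ Pp r = 0.
Definition rhoR (r : R) : R := Np r / Dp r.

End StdPart.

From mathcomp Require Import ring lra.


Local Open Scope ring_scope.
Set Implicit Arguments. Unset Strict Implicit.
Definition cA (v1 v2 rho den n1 n2 n3 n4 n5 n6 : RR) (a1 a2 o1 o2 : bool) : RR :=
  let x := (if a1 then v1 else 0) + (if a2 then v2 else 0) in
  let y := (if o1 then v1 else 0) + (if o2 then v2 else 0) in
  den * (x - rho * y)
  + n1 * ((if o1 then 1 else 0) - (if a1 then 1 else 0))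
  + n2 * ((if o2 then 1 else 0) - (if a1 then 1 else 0))
  + n3 * ((if a2 then 1 else 0) - (if a1 then 1 else 0))
  + n4 * ((if o1 then 1 else 0) - (if a2 then 1 else 0))
  + n5 * ((if o2 then 1 else 0) - (if a2 then 1 else 0))
  + n6 * ((if a1 then 1 else 0) - (if a2 then 1 else 0)).

Definition cB (v1 v2 rho den n1 n2 n3 n4 n5 n6 : RR) (a1 a2 o1 o2 : bool) : RR :=
  let x := (if a1 then v1 else 0) + (if a2 then v2 else 0) in
  let y := (if o1 then v1 else 0) + (if o2 then v2 else 0) in
  den * (x * x - rho * (y * y))
  + n1 * ((if o1 then v1 + (if a2 then v2 else 0) else 0) - (if a1 then x else 0))
  + n2 * ((if o2 then v1 + (if a2 then v2 else 0) else 0) - (if a1 then x else 0))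
  + n3 * ((if a2 then v1 + v2 else 0) - (if a1 then x else 0))
  + n4 * ((if o1 then v2 + (if a1 then v1 else 0) else 0) - (if a2 then x else 0))
  + n5 * ((if o2 then v2 + (if a1 then v1 else 0) else 0) - (if a2 then x else 0))
  + n6 * ((if a1 then v2 + v1 else 0) - (if a2 then x else 0)).

Definition S1 m (alpha beta : 'I_m -> RR) w1 w2 (A2 B : {set 'I_m}) : RR :=
  \sum_(r in B) (alpha r + beta r * load w1 w2 B A2 r).
Definition S2 m (alpha beta : 'I_m -> RR) w1 w2 (A1 B : {set 'I_m}) : RR :=
  \sum_(r in B) (alpha r + beta r * load w1 w2 A1 B r).

Definition tm m (alpha beta : 'I_m -> RR) w1 w2 (B C A : {set 'I_m}) (r : 'I_m) : RR :=
  if r \in A then alpha r + beta r * load w1 w2 B C r else 0.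

Lemma fin_step (den s CA CO rho d1 d2 d3 d4 d5 d6 : RR) : 0 < den -> 0 < s ->
  den * (CA - rho * CO) + s * (d1 + d2 + d3 + d4 + d5 + d6) <= 0 ->
  0 <= d1 -> 0 <= d2 -> 0 <= d3 -> 0 <= d4 -> 0 <= d5 -> 0 <= d6 -> CA <= rho * CO.
Proof. move=> *; nra. Qed.

Lemma core m (alpha beta : 'I_m -> RR) (w1 w2 : RR) (A1 A2 O1 O2 : {set 'I_m})
  (rho s v1 v2 den n1 n2 n3 n4 n5 n6 : RR) :
  (forall r, 0 <= alpha r) -> (forall r, 0 <= beta r) ->
  0 < s -> w1 = s * v1 -> w2 = s * v2 -> 0 < den ->
  0 <= n1 * (S1 alpha beta w1 w2 A2 O1 - S1 alpha beta w1 w2 A2 A1) ->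
  0 <= n2 * (S1 alpha beta w1 w2 A2 O2 - S1 alpha beta w1 w2 A2 A1) ->
  0 <= n3 * (S1 alpha beta w1 w2 A2 A2 - S1 alpha beta w1 w2 A2 A1) ->
  0 <= n4 * (S2 alpha beta w1 w2 A1 O1 - S2 alpha beta w1 w2 A1 A2) ->
  0 <= n5 * (S2 alpha beta w1 w2 A1 O2 - S2 alpha beta w1 w2 A1 A2) ->
  0 <= n6 * (S2 alpha beta w1 w2 A1 A1 - S2 alpha beta w1 w2 A1 A2) ->
  (forall a1 a2 o1 o2, cA v1 v2 rho den n1 n2 n3 n4 n5 n6 a1 a2 o1 o2 <= 0 /\
                       cB v1 v2 rho den n1 n2 n3 n4 n5 n6 a1 a2 o1 o2 <= 0) ->
  social_cost alpha beta w1 w2 A1 A2 <= rho * social_cost alpha beta w1 w2 O1 O2.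
Proof.
move=> ha hb hs hw1 hw2 hden h1 h2 h3 h4 h5 h6 hc.
pose T := tm alpha beta w1 w2.
have key : forall q : seq 'I_m,
  den * (w1 * \sum_(r <- q) T A1 A2 A1 r + w2 * \sum_(r <- q) T A1 A2 A2 r
         - rho * (w1 * \sum_(r <- q) T O1 O2 O1 r + w2 * \sum_(r <- q) T O1 O2 O2 r))
  + s * (n1 * (\sum_(r <- q) T O1 A2 O1 r - \sum_(r <- q) T A1 A2 A1 r)
       + n2 * (\sum_(r <- q) T O2 A2 O2 r - \sum_(r <- q) T A1 A2 A1 r)
       + n3 * (\sum_(r <- q) T A2 A2 A2 r - \sum_(r <- q) T A1 A2 A1 r)
       + n4 * (\sum_(r <- q) T A1 O1 O1 r - \sum_(r <- q) T A1 A2 A2 r)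
       + n5 * (\sum_(r <- q) T A1 O2 O2 r - \sum_(r <- q) T A1 A2 A2 r)
       + n6 * (\sum_(r <- q) T A1 A1 A1 r - \sum_(r <- q) T A1 A2 A2 r)) <= 0.
  elim=> [|x q IH]; first by rewrite !big_nil; lra.
  rewrite !big_cons.
  have [hA hB] := hc (x \in A1) (x \in A2) (x \in O1) (x \in O2).
  have gx : den * (w1 * T A1 A2 A1 x + w2 * T A1 A2 A2 x
         - rho * (w1 * T O1 O2 O1 x + w2 * T O1 O2 O2 x))
  + s * (n1 * (T O1 A2 O1 x - T A1 A2 A1 x)
       + n2 * (T O2 A2 O2 x - T A1 A2 A1 x)
       + n3 * (T A2 A2 A2 x - T A1 A2 A1 x)
       + n4 * (T A1 O1 O1 x - T A1 A2 A2 x)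
       + n5 * (T A1 O2 O2 x - T A1 A2 A2 x)
       + n6 * (T A1 A1 A1 x - T A1 A2 A2 x)) =
     s * alpha x * cA v1 v2 rho den n1 n2 n3 n4 n5 n6 (x \in A1) (x \in A2) (x \in O1) (x \in O2)
     + s ^+ 2 * beta x * cB v1 v2 rho den n1 n2 n3 n4 n5 n6 (x \in A1) (x \in A2) (x \in O1) (x \in O2).
    rewrite /T /tm /load /cA /cB hw1 hw2.
    by case: (x \in A1); case: (x \in A2); case: (x \in O1); case: (x \in O2) => /=; ring.
  have gle : s * alpha x * cA v1 v2 rho den n1 n2 n3 n4 n5 n6 (x \in A1) (x \in A2) (x \in O1) (x \in O2)
     + s ^+ 2 * beta x * cB v1 v2 rho den n1 n2 n3 n4 n5 n6 (x \in A1) (x \in A2) (x \in O1) (x \in O2) <= 0.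
    have g1 : s * alpha x * cA v1 v2 rho den n1 n2 n3 n4 n5 n6 (x \in A1) (x \in A2) (x \in O1) (x \in O2) <= 0.
      by apply: mulr_ge0_le0 => //; apply: mulr_ge0 => //; exact: ltW.
    have g2 : s ^+ 2 * beta x * cB v1 v2 rho den n1 n2 n3 n4 n5 n6 (x \in A1) (x \in A2) (x \in O1) (x \in O2) <= 0.
      apply: mulr_ge0_le0 => //; apply: mulr_ge0 => //.
      by apply: exprn_ge0; exact: ltW.
    lra.
  move: IH gx gle.
  set c1 := cA _ _ _ _ _ _ _ _ _ _ _ _ _ _.
  set c2 := cB _ _ _ _ _ _ _ _ _ _ _ _ _ _.
  move=> IH gx gle.
  lra.
have K := key (index_enum 'I_m).
rewrite /T in K.
have eS1 : forall B, S1 alpha beta w1 w2 A2 B = \sum_(r <- index_enum 'I_m) tm alpha beta w1 w2 B A2 B r.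
  by move=> B; rewrite /S1 big_mkcond.
have eS2 : forall B, S2 alpha beta w1 w2 A1 B = \sum_(r <- index_enum 'I_m) tm alpha beta w1 w2 A1 B B r.
  by move=> B; rewrite /S2 big_mkcond.
have eC1 : forall B C, cost1 alpha beta w1 w2 B C = w1 * \sum_(r <- index_enum 'I_m) tm alpha beta w1 w2 B C B r.
  by move=> B C; rewrite /cost1 big_mkcond.
have eC2 : forall B C, cost2 alpha beta w1 w2 B C = w2 * \sum_(r <- index_enum 'I_m) tm alpha beta w1 w2 B C C r.
  by move=> B C; rewrite /cost2 big_mkcond.
rewrite !eS1 in h1 h2 h3. rewrite !eS2 in h4 h5 h6.
rewrite /social_cost !eC1 !eC2.
exact: (fin_step hden hs K h1 h2 h3 h4 h5 h6).
Qed.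


Lemma bridge v1 v2 rho den n1 n2 n3 n4 n5 n6 :
  StdPart.condsR v1 v2 rho den n1 n2 n3 n4 n5 n6 ->
  forall a1 a2 o1 o2, cA v1 v2 rho den n1 n2 n3 n4 n5 n6 a1 a2 o1 o2 <= 0 /\
                      cB v1 v2 rho den n1 n2 n3 n4 n5 n6 a1 a2 o1 o2 <= 0.
Proof.
move=> h a1 a2 o1 o2; case: (h a1 a2 o1 o2) => h1 h2; split; apply/RleP; [exact: h1 | exact: h2].
Qed.


Lemma social_ge0 m (alpha beta : 'I_m -> RR) w1 w2 (A1 A2 : {set 'I_m}) :
  (forall i, 0 <= alpha i) -> (forall i, 0 <= beta i) -> 0 <= w1 -> 0 <= w2 ->
  0 <= social_cost alpha beta w1 w2 A1 A2.
Proof.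
move=> ha hb h1 h2.
have hl : forall i, 0 <= load w1 w2 A1 A2 i.
  by move=> i; rewrite /load; apply: addr_ge0; case: ifP.
rewrite /social_cost /cost1 /cost2; apply: addr_ge0; apply: mulr_ge0 => //;
  apply: sumr_ge0 => i _; apply: addr_ge0 => //; exact: mulr_ge0.
Qed.

Lemma load_swap m w1 w2 (A1 A2 : {set 'I_m}) r : load w2 w1 A2 A1 r = load w1 w2 A1 A2 r.
Proof. by rewrite /load addrC. Qed.

Lemma cost1_swap m (alpha beta : 'I_m -> RR) w1 w2 (B C : {set 'I_m}) :
  cost1 alpha beta w2 w1 B C = cost2 alpha beta w1 w2 C B.
Proof. by rewrite /cost1 /cost2; congr (_ * _); apply: eq_bigr => i _; rewrite load_swap. Qed.

Lemma cost2_swap m (alpha beta : 'I_m -> RR) w1 w2 (B C : {set 'I_m}) :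
  cost2 alpha beta w2 w1 B C = cost1 alpha beta w1 w2 C B.
Proof. by rewrite /cost1 /cost2; congr (_ * _); apply: eq_bigr => i _; rewrite load_swap. Qed.

Lemma social_swap m (alpha beta : 'I_m -> RR) w1 w2 (A1 A2 : {set 'I_m}) :
  social_cost alpha beta w2 w1 A2 A1 = social_cost alpha beta w1 w2 A1 A2.
Proof. by rewrite /social_cost (cost1_swap alpha beta w1 w2) (cost2_swap alpha beta w1 w2) addrC. Qed.

Lemma NE_swap m (alpha beta : 'I_m -> RR) w1 w2 acts (A1 A2 : {set 'I_m}) :
  is_NE alpha beta w1 w2 acts A1 A2 -> is_NE alpha beta w2 w1 acts A2 A1.
Proof.
move=> [h1 [h2 [h3 h4]]]; split => //; split => //; split => B hB.
  by rewrite !cost1_swap; apply: h4.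
by rewrite !cost2_swap; apply: h3.
Qed.

Lemma UB_le m (alpha beta : 'I_m -> RR) w1 w2 acts (A1 A2 O1 O2 : {set 'I_m}) (r : RR) :
  StdPart.rgood r ->
  (forall i, 0 <= alpha i) -> (forall i, 0 <= beta i) -> 0 <= w2 -> w2 <= w1 -> 0 < w1 ->
  is_NE alpha beta w1 w2 acts A1 A2 -> acts O1 -> acts O2 ->
  social_cost alpha beta w1 w2 A1 A2 <= StdPart.rhoR r * social_cost alpha beta w1 w2 O1 O2.
Proof.
move=> [hr hp] ha hb h2 h21 h1 [hA1 [hA2 [N1 N2]]] hO1 hO2.
have h1' : Rdefinitions.Rlt 0 w1 by apply/RltP.
have h2' : Rdefinitions.Rle 0 w2 by apply/RleP.
have h21' : Rdefinitions.Rle w2 w1 by apply/RleP.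
have [s [v1 [v2 [den [n1 [n2 [n3 [n4 [n5 [n6 [rho' [hs [e1 [e2 [hden [p1 [p2 [p3 [p4 [p5 [p6 [hz [hrho hc]]]]]]]]]]]]]]]]]]]]]]] :=
  StdPart.cert r w1 w2 hr hp h1' h2' h21'.
have hS1 : forall B, acts B -> S1 alpha beta w1 w2 A2 A1 <= S1 alpha beta w1 w2 A2 B.
  by move=> B hB; have := N1 B hB; rewrite /cost1 /S1 ler_pM2l.
have hp1 : forall k B, Rdefinitions.Rle 0 k -> acts B ->
    0 <= k * (S1 alpha beta w1 w2 A2 B - S1 alpha beta w1 w2 A2 A1).
  move=> k B hk hB; apply: mulr_ge0; first exact/RleP.
  by rewrite subr_ge0; apply: hS1.
have hp2 : forall k B, Rdefinitions.Rle 0 k -> (w2 = 0 -> k = 0) -> acts B ->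
    0 <= k * (S2 alpha beta w1 w2 A1 B - S2 alpha beta w1 w2 A1 A2).
  move=> k B hk hk0 hB; have [z|nz] := eqVneq w2 0; first by rewrite (hk0 z) mul0r.
  apply: mulr_ge0; first exact/RleP.
  have w2p : 0 < w2 by rewrite lt_def nz h2.
  by rewrite subr_ge0; have := N2 B hB; rewrite /cost2 /S2 ler_pM2l.
have hs' : 0 < s by apply/RltP.
have hden' : 0 < den by apply/RltP.
apply: (le_trans (y := rho' * social_cost alpha beta w1 w2 O1 O2)).
  apply: (@core _ alpha beta w1 w2 A1 A2 O1 O2 rho' s v1 v2 den n1 n2 n3 n4 n5 n6 ha hb hs' e1 e2 hden'
     (hp1 n1 O1 p1 hO1) (hp1 n2 O2 p2 hO2) (hp1 n3 A2 p3 hA2)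
     (hp2 n4 O1 p4 (fun z => proj1 (hz z)) hO1) (hp2 n5 O2 p5 (fun z => proj1 (proj2 (hz z))) hO2)
     (hp2 n6 A1 p6 (fun z => proj2 (proj2 (hz z))) hA1) (bridge hc)).
apply: ler_wpM2r; first exact: social_ge0 (ltW h1) h2.
exact/RleP.
Qed.


Definition nd (k : nat) (h : (k < 6)%N) : 'I_6 := Ordinal h.
Definition ar (k : nat) (h : (k < 8)%N) : 'I_8 := Ordinal h.
Notation "'n[' k ']'" := (@nd k isT).
Notation "'a[' k ']'" := (@ar k isT).

Definition tlI (e : 'I_8) : 'I_6 :=
  match val e with 0 => n[0] | 1 => n[0] | 2 => n[1] | 3 => n[2] | 4 => n[3] | 5 => n[3] | 6 => n[4] | _ => n[1] end.
Definition hdI (e : 'I_8) : 'I_6 :=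
  match val e with 0 => n[2] | 1 => n[1] | 2 => n[2] | 3 => n[3] | 4 => n[4] | 5 => n[5] | 6 => n[5] | _ => n[4] end.

Definition Wl (v : 'I_6) : seq (seq 'I_8) :=
  match val v with
  | 5 => [:: [::]]
  | 4 => [:: [:: a[6]]]
  | 3 => [:: [:: a[5]]; [:: a[4]; a[6]]]
  | 2 => [:: [:: a[3]; a[5]]; [:: a[3]; a[4]; a[6]]]
  | 1 => [:: [:: a[2]; a[3]; a[5]]; [:: a[2]; a[3]; a[4]; a[6]]; [:: a[7]; a[6]]]
  | _ => [:: [:: a[0]; a[3]; a[5]]; [:: a[0]; a[3]; a[4]; a[6]];
            [:: a[1]; a[2]; a[3]; a[5]]; [:: a[1]; a[2]; a[3]; a[4]; a[6]]; [:: a[1]; a[7]; a[6]]]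
  end.

Lemma Wl_step (e : 'I_8) (q : seq 'I_8) : q \in Wl (hdI e) -> (e :: q) \in Wl (tlI e).
Proof.
case: e => k hk.
do 8 (case: k hk => [|k] hk; [rewrite /= !inE; by repeat (case/orP=> [/eqP -> //|]); move/eqP=> -> |]).
by [].
Qed.

Lemma walkW (p : seq 'I_8) (v : 'I_6) : walk_to tlI hdI v p n[5] -> p \in Wl v.
Proof.
elim: p v => [|e p IH] v /=.
  by move/eqP=> ->.
case/andP=> /eqP <- hw.
exact: Wl_step (IH _ hw).
Qed.

Definition betaI (r : RR) (e : 'I_8) : RR :=
  match val e with
  | 0 => r + 1 | 1 => (r + 1) ^+ 2 | 3 => r ^+ 2 + r + 1 | 5 => r * (r + 1) | 6 => (r + 1) ^+ 2 | _ => 0 end.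
Definition alphaI (e : 'I_8) : RR := 0.
Definition qA1 : seq 'I_8 := [:: a[0]; a[3]; a[4]; a[6]].
Definition qA2 : seq 'I_8 := [:: a[1]; a[2]; a[3]; a[5]].
Definition qO1 : seq 'I_8 := [:: a[0]; a[3]; a[5]].
Definition qO2 : seq 'I_8 := [:: a[1]; a[7]; a[6]].
Definition SA1 : {set 'I_8} := [set e in qA1].
Definition SA2 : {set 'I_8} := [set e in qA2].
Definition SO1 : {set 'I_8} := [set e in qO1].
Definition SO2 : {set 'I_8} := [set e in qO2].

Lemma sum_set (F : 'I_8 -> RR) (q : seq 'I_8) : uniq q ->
  \sum_(i in [set e in q]) F i = \sum_(i <- q) F i.
Proof. move=> hq; rewrite (big_uniq _ hq); apply: eq_bigl => i; by rewrite inE. Qed.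

Lemma pathA1 : st_path_arcs tlI hdI n[0] n[5] SA1.
Proof. by exists qA1. Qed.
Lemma pathA2 : st_path_arcs tlI hdI n[0] n[5] SA2.
Proof. by exists qA2. Qed.
Lemma pathO1 : st_path_arcs tlI hdI n[0] n[5] SO1.
Proof. by exists qO1. Qed.
Lemma pathO2 : st_path_arcs tlI hdI n[0] n[5] SO2.
Proof. by exists qO2. Qed.

Definition qP : seq 'I_8 := [:: a[1]; a[2]; a[3]; a[4]; a[6]].
Definition SP : {set 'I_8} := [set e in qP].

Lemma paths_inv B : st_path_arcs tlI hdI n[0] n[5] B ->
  B = SO1 \/ B = SA1 \/ B = SA2 \/ B = SP \/ B = SO2.
Proof.
move=> [p [hw [_ ->]]]; have := walkW hw; rewrite /Wl /= !inE.
case/orP=> [/eqP -> | ]; first by left.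
case/orP=> [/eqP -> | ]; first by right; left.
case/orP=> [/eqP -> | ]; first by right; right; left.
case/orP=> [/eqP -> | ]; first by right; right; right; left.
by move/eqP ->; right; right; right; right.
Qed.

Lemma NE_inst (r : RR) : 0 <= r ->
  is_NE alphaI (betaI r) r 1 (st_path_arcs tlI hdI n[0] n[5]) SA1 SA2.
Proof.
move=> hr; split; first exact: pathA1.
split; first exact: pathA2.
split=> B /paths_inv [->|[->|[->|[->|->]]]].
all: rewrite /cost1 /cost2 /SA1 /SA2 /SO1 /SO2 /SP /qA1 /qA2 /qO1 /qO2 /qP !sum_set //= !big_cons !big_nil /load /betaI /alphaI /= !inE /=.
all: nra.
Qed.


Lemma Np_eq (r : RR) : StdPart.Np r = 2*r^+4 + 6*r^+3 + 8*r^+2 + 6*r + 2.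
Proof. rewrite /StdPart.Np !RealsE /=. ring. Qed.
Lemma Dp_eq (r : RR) : StdPart.Dp r = 2*r^+4 + 3*r^+3 + 4*r^+2 + 4*r + 2.
Proof. rewrite /StdPart.Dp !RealsE /=. ring. Qed.

Lemma costA (r : RR) : social_cost alphaI (betaI r) r 1 SA1 SA2 = StdPart.Np r.
Proof.
rewrite Np_eq /social_cost /cost1 /cost2 /SA1 /SA2 /qA1 /qA2 !sum_set //= !big_cons !big_nil /load /betaI /alphaI /= !inE /=.
ring.
Qed.
Lemma costO (r : RR) : social_cost alphaI (betaI r) r 1 SO1 SO2 = StdPart.Dp r.
Proof.
rewrite Dp_eq /social_cost /cost1 /cost2 /SO1 /SO2 /qO1 /qO2 !sum_set //= !big_cons !big_nil /load /betaI /alphaI /= !inE /=.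
ring.
Qed.


Lemma cst (p q : BinNums.positive) : Rdefinitions.Rdiv (Rdefinitions.IZR (BinNums.Zpos p)) (Rdefinitions.IZR (BinNums.Zpos q)) =
  (nat_of_pos p)%:R / (nat_of_pos q)%:R.
Proof. by rewrite RdivE !IZRposE !INRE. Qed.

Lemma k1 : (16095%:R / 10000%:R : RR) = StdPart.k16095.
Proof. by rewrite /StdPart.k16095 cst. Qed.
Lemma k2 : (16097%:R / 10000%:R : RR) = StdPart.k16097.
Proof. by rewrite /StdPart.k16097 cst. Qed.
Lemma k3 : (11935%:R / 10000%:R : RR) = StdPart.k11935.
Proof. by rewrite /StdPart.k11935 cst. Qed.
Lemma k4 : (11945%:R / 10000%:R : RR) = StdPart.k11945.
Proof. by rewrite /StdPart.k11945 cst. Qed.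

Lemma UB m (alpha beta : 'I_m -> RR) w1 w2 acts (A1 A2 O1 O2 : {set 'I_m}) (r : RR) :
  StdPart.rgood r ->
  (forall i, 0 <= alpha i) -> (forall i, 0 <= beta i) -> 0 <= w1 -> 0 <= w2 -> 0 < w1 + w2 ->
  is_NE alpha beta w1 w2 acts A1 A2 -> acts O1 -> acts O2 ->
  social_cost alpha beta w1 w2 A1 A2 <= StdPart.rhoR r * social_cost alpha beta w1 w2 O1 O2.
Proof.
move=> hr ha hb h1 h2 h12 hNE hO1 hO2.
case: (lerP w2 w1) => hle.
  by apply: (UB_le hr ha hb h2 hle _ hNE hO1 hO2); lra.
rewrite -(social_swap alpha beta w1 w2 A1 A2) -(social_swap alpha beta w1 w2 O1 O2).
apply: (UB_le hr ha hb h1 (ltW hle) _ (NE_swap hNE) hO2 hO1); lra.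
Qed.

Lemma ratio_ub W x (r : RR) : StdPart.rgood r -> poa_ratios_cg W x -> x <= StdPart.rhoR r.
Proof.
move=> hr [m [alpha [beta [w1 [w2 [acts [A1 [A2 [O1 [O2
  [ha [hb [h1 [h2 [h12 [_ [_ [hNE [[hO1 [hO2 _]] [hpos ->]]]]]]]]]]]]]]]]]]]].
rewrite ler_pdivrMr //.
exact: UB hr ha hb h1 h2 h12 hNE hO1 hO2.
Qed.

Lemma net_cg W x : poa_ratios_net W x -> poa_ratios_cg W x.
Proof.
move=> [n [m [tl [hd [s [t [alpha [beta [w1 [w2 [A1 [A2 [O1 [O2 H]]]]]]]]]]]]]].
by exists m, alpha, beta, w1, w2, (st_path_arcs tl hd s t), A1, A2, O1, O2.
Qed.

Lemma net_mono (W W' : RR -> RR -> Prop) x : (forall a b, W a b -> W' a b) ->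
  poa_ratios_net W x -> poa_ratios_net W' x.
Proof.
move=> hW [n [m [tl [hd [s [t [alpha [beta [w1 [w2 [A1 [A2 [O1 [O2
  [ha [hb [h1 [h2 [h12 [hw H]]]]]]]]]]]]]]]]]]]].
exists n, m, tl, hd, s, t, alpha, beta, w1, w2, A1, A2, O1, O2.
by do 5 (split => //); split; [exact: hW|].
Qed.

Lemma OPT_swap m (alpha beta : 'I_m -> RR) w1 w2 acts (O1 O2 : {set 'I_m}) :
  is_OPT alpha beta w1 w2 acts O1 O2 -> is_OPT alpha beta w2 w1 acts O2 O1.
Proof.
move=> [h1 [h2 h3]]; split => //; split => // B1 B2 hB1 hB2.
rewrite (social_swap alpha beta w1 w2 O1 O2) (social_swap alpha beta w1 w2 B2 B1); exact: h3.
Qed.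

Lemma net_swap (r x : RR) : poa_ratios_net (ratio12 r) x -> poa_ratios_net (ratio21 r) x.
Proof.
move=> [n [m [tl [hd [s [t [alpha [beta [w1 [w2 [A1 [A2 [O1 [O2
  [ha [hb [h1 [h2 [h12 [hw [hex [hNE [hOPT [hpos ->]]]]]]]]]]]]]]]]]]]]]]]].
exists n, m, tl, hd, s, t, alpha, beta, w2, w1, A2, A1, O2, O1.
rewrite (social_swap alpha beta w1 w2 A1 A2) (social_swap alpha beta w1 w2 O1 O2).
do 4 (split => //); split; first by rewrite addrC.
split; first exact: hw.
split => //; split; first exact: NE_swap.
by split; first exact: OPT_swap.
Qed.

Lemma betaI_ge0 (r : RR) : 0 <= r -> forall e, 0 <= betaI r e.
Proof.
move=> hr [k hk]; rewrite /betaI /=; case: k hk => [|[|[|[|[|[|[|k]]]]]]] hk /=; nra.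
Qed.

Lemma rho_eq (r : RR) : StdPart.rhoR r = StdPart.Np r / StdPart.Dp r.
Proof. by rewrite /StdPart.rhoR RdivE. Qed.

Lemma inst_net (r : RR) : StdPart.rgood r -> poa_ratios_net (ratio12 r) (StdPart.rhoR r).
Proof.
move=> hr.
have r1 : 1 <= r by apply/RleP; apply: StdPart.r_pos; case: hr.
have r0 : 0 <= r by lra.
have hD : 0 < StdPart.Dp r by apply/RltP; apply: StdPart.Dp_pos; apply/RleP.
have hN : 0 < StdPart.Np r by apply/RltP; apply: StdPart.Np_pos; apply/RleP.
exists 6, 8, tlI, hdI, n[0], n[5], alphaI, (betaI r), r, 1, SA1, SA2, SO1, SO2.
split; first by move=> i; rewrite /alphaI.
split; first exact: betaI_ge0.
split => //; split => //; split; first lra.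
split; first by split => //; rewrite mulr1.
split; first by exists SA1; exact: pathA1.
split; first exact: NE_inst.
split.
  split; first exact: pathO1.
  split; first exact: pathO2.
  move=> B1 B2 hB1 hB2.
  have hr1 : 0 < r + 1 by lra.
  have := UB hr (fun i => lexx 0) (betaI_ge0 r0) r0 ler01 hr1 (NE_inst r0) hB1 hB2.
  rewrite costA rho_eq => h.
  have hX : 0 < StdPart.Np r / StdPart.Dp r by apply: divr_gt0.
  have eX : StdPart.Np r / StdPart.Dp r * StdPart.Dp r = StdPart.Np r by rewrite divfK // gt_eqF.
  by rewrite costO -(ler_pM2l hX) eX.
split; first by rewrite costO.
by rewrite costA costO rho_eq.
Qed.


Lemma is_sup_of (S : RR -> Prop) x : (forall y, S y -> y <= x) -> S x -> is_sup S x.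
Proof. by move=> h1 h2; split => // z hz; exact: hz. Qed.

Theorem corollary4 :
  exists rho : RR,
    16095%:R / 10000%:R <= rho <= 16097%:R / 10000%:R /\
    is_sup (poa_ratios_cg any_weights) rho /\
    is_sup (poa_ratios_net any_weights) rho /\
    exists r : RR,
      11935%:R / 10000%:R <= r <= 11945%:R / 10000%:R /\
      is_sup (poa_ratios_cg (ratio12 r)) rho /\
      is_sup (poa_ratios_net (ratio12 r)) rho /\
      is_sup (poa_ratios_cg (ratio21 r)) rho /\
      is_sup (poa_ratios_net (ratio21 r)) rho.
Proof.
case: StdPart.root_ex => r [hr hp].
have hg : StdPart.rgood r by split.
have [lo hi] := StdPart.rho_bounds r hr.
have net12 := inst_net hg.
have net21 := net_swap net12.
have netany : poa_ratios_net any_weights (StdPart.rhoR r) by apply: net_mono net12.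
have ubc : forall W y, poa_ratios_cg W y -> y <= StdPart.rhoR r by move=> W y; exact: ratio_ub hg.
have ubn : forall W y, poa_ratios_net W y -> y <= StdPart.rhoR r by move=> W y h; exact: ubc (net_cg h).
exists (StdPart.rhoR r).
split.
  by rewrite k1 k2; apply/andP; split; apply/RleP.
split; first by apply: is_sup_of; [exact: ubc | exact: net_cg].
split; first by apply: is_sup_of; [exact: ubn | exact: netany].
exists r.
split.
  by rewrite k3 k4; case: hr => h1 h2; apply/andP; split; apply/RleP.
split; first by apply: is_sup_of; [exact: ubc | exact: net_cg].
split; first by apply: is_sup_of; [exact: ubn | exact: net12].
split; first by apply: is_sup_of; [exact: ubc | exact: net_cg].
by apply: is_sup_of; [exact: ubn | exact: net21].
Qed.
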